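(* Let $p$ be a prime and let $P$ be any box with inputs and outputs in $\mathbb{Z}_p$. For $j\in\mathbb{Z}_p$ define $$\mu_j=\frac1{p^2}\sum_{x,y=0}^{p-1}\ \sum_{k=0}^{p-1}P(a=k,\,b=k-xy+j\mid x,y).$$ Then $P\to\sum_{j=0}^{p-1}\mu_j\,PR_{p,j}$. Explicitly, the following protocol uses one copy of $P$. Alice and Bob draw independent uniform shared $\alpha,\beta,\gamma\in\mathbb{Z}_p$. They input $x+\alpha$ and $y+\beta$ into $P$ and obtain $a',b'$. Alice outputs $a=a'-\beta x-\alpha\beta+\gamma$ and Bob outputs $b=b'+\alpha y+\gamma$. The resulting box is exactly $\sum_{j}\mu_jPR_{p,j}$.
   Context: Let $p$ be a prime. All arithmetic on elements of $\mathbb{Z}_p$ is modulo $p$. A box is a conditional probability distribution $P(a,b\mid x,y)$ with $a,b,x,y\in\mathbb{Z}_p$. It is shared by Alice, who supplies $x$ and receives $a$, and Bob, who supplies $y$ and receives $b$. Different copies act independently. For $j\in\mathbb{Z}_p$, the box $PR_{p,j}$ is defined by $PR_{p,j}(a,b\mid x,y)=1/p$ if $a-b=xy-j$, and $0$ otherwise. A convex combination of boxes is the corresponding convex combination of conditional distributions. $P_1\to P_2$ means the following. For some $N\ge1$, Alice and Bob, using shared randomness, $N$ copies of $P_1$, and local processing but no communication, can exactly produce outputs distributed as $P_2(a,b\mid x,y)$ for every input pair $(x,y)$. *)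

(* Defs.v *)
From HB Require Import structures.
From mathcomp Require Import all_boot all_order all_algebra.
Set Implicit Arguments. Unset Strict Implicit. Unset Printing Implicit Defensive.
Import Order.TTheory GRing.Theory Num.Theory.
Local Open Scope ring_scope.

(* A box with inputs/outputs in Z_p: P a b x y = P(a,b | x,y).
   Probabilities live in an arbitrary real field R. *)
Definition box (R : realFieldType) (p : nat) := 'F_p -> 'F_p -> 'F_p -> 'F_p -> R.

Definition is_box (R : realFieldType) (p : nat) (P : box R p) : Prop :=
  (forall a b x y, 0 <= P a b x y) /\
  (forall x y, \sum_(a : 'F_p) \sum_(b : 'F_p) P a b x y = 1).

Definition PR (R : realFieldType) (p : nat) (j : 'F_p) : box R p :=
  fun a b x y => if a - b == x * y - j then (p%:R)^-1 else 0.

Definition mu (R : realFieldType) (p : nat) (P : box R p) (j : 'F_p) : R :=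
  (p%:R ^+ 2)^-1 *
  \sum_(x : 'F_p) \sum_(y : 'F_p) \sum_(k : 'F_p) P k (k - x * y + j) x y.

Definition PR_mixture (R : realFieldType) (p : nat) (P : box R p) : box R p :=
  fun a b x y => \sum_(j : 'F_p) mu P j * PR R j a b x y.

(* P1 -> P2 : exact simulation using N >= 1 copies of P1, shared randomness
   and local (possibly adaptive) processing, no communication.
   - Shared randomness: a finite probability space (Lam, q); local randomness
     is absorbed into it (finitely many deterministic strategies exist, so a
     finite space is without loss of generality).
   - Alice uses the copies in order 0..N-1; the input she gives to copy i may
     depend on the shared randomness, her input x and her outputs from the
     copies k < i (causality); her final output depends on the shared
     randomness, x and all her outputs.  Same for Bob.
   - The copies act independently: the joint probability of output vectors
     (oa, ob) is the product over copies of P1(oa i, ob i | inputs i). *)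
Definition simulates (R : realFieldType) (p : nat) (P1 P2 : box R p) : Prop :=
  exists (N : nat) (Lam : finType) (q : Lam -> R)
         (inA : Lam -> 'F_p -> {ffun 'I_N -> 'F_p} -> 'I_N -> 'F_p)
         (outA : Lam -> 'F_p -> {ffun 'I_N -> 'F_p} -> 'F_p)
         (inB : Lam -> 'F_p -> {ffun 'I_N -> 'F_p} -> 'I_N -> 'F_p)
         (outB : Lam -> 'F_p -> {ffun 'I_N -> 'F_p} -> 'F_p),
    [/\ (1 <= N)%N,
        (forall l, 0 <= q l),
        \sum_(l : Lam) q l = 1,
        (forall l x (o o' : {ffun 'I_N -> 'F_p}) (i : 'I_N),
           (forall k : 'I_N, (k < i)%N -> o k = o' k) ->
           inA l x o i = inA l x o' i /\ inB l x o i = inB l x o' i) &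
        (forall a b x y,
           P2 a b x y =
           \sum_(l : Lam) q l *
             \sum_(oa : {ffun 'I_N -> 'F_p}) \sum_(ob : {ffun 'I_N -> 'F_p})
               ((outA l x oa == a) && (outB l y ob == b))%:R *
               \prod_(i : 'I_N) P1 (oa i) (ob i) (inA l x oa i) (inB l y ob i))].

Definition depolarize_protocol (R : realFieldType) (p : nat) (P : box R p) : box R p :=
  fun a b x y =>
    (p%:R ^+ 3)^-1 *
    \sum_(al : 'F_p) \sum_(be : 'F_p) \sum_(ga : 'F_p)
      \sum_(a' : 'F_p) \sum_(b' : 'F_p)
        ((a == a' - be * x - al * be + ga) && (b == b' + al * y + ga))%:R *
        P a' b' (x + al) (y + be).

(* Main.v *)
Require Import Defs.
From HB Require Import structures.
From mathcomp Require Import all_boot all_order all_algebra.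
From mathcomp Require Import ring.
From Stdlib Require Import FunctionalExtensionality.
Import Order.TTheory GRing.Theory Num.Theory.
Local Open Scope ring_scope.

Lemma sum_ind (R : realFieldType) (T : finType) (F : T -> R) (c : T) :
  \sum_(t : T) ((t == c)%:R * F t) = F c.
Proof.
rewrite (bigD1 c) //= eqxx mul1r big1 ?addr0 // => t /negbTE ->.
by rewrite mul0r.
Qed.

Lemma sum2_ind (R : realFieldType) (T : finType) (F : T -> T -> R) (A B : T) :
  \sum_(s : T) \sum_(t : T) (((s == A) && (t == B))%:R * F s t) = F A B.
Proof.
rewrite -(@sum_ind R T (fun s => F s B) A); apply: eq_bigr => s _.
case: (s == A) => /=; first by rewrite mul1r sum_ind.
by rewrite mul0r big1 // => t _; rewrite mul0r.
Qed.

Lemma sub_inj (p : nat) (c : 'F_p) : injective (fun u : 'F_p => u - c).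
Proof. by move=> u v /= /eqP; rewrite (can_eq (subrK c)) => /eqP. Qed.

Lemma rsub_inj (p : nat) (c : 'F_p) : injective (fun u : 'F_p => c - u).
Proof. by move=> u v /= H; apply: oppr_inj; apply: (addrI c). Qed.

Lemma depol_eq (R : realFieldType) (p : nat) (P : box R p) :
  prime p -> depolarize_protocol P = PR_mixture P.
Proof.
move=> pp; apply: functional_extensionality => a; apply: functional_extensionality => b; apply: functional_extensionality => x; apply: functional_extensionality => y.
rewrite /depolarize_protocol /PR_mixture.
have E : forall al be ga : 'F_p,
  \sum_(a' : 'F_p) \sum_(b' : 'F_p)
   ((a == a' - be * x - al * be + ga) && (b == b' + al * y + ga))%:R *
   P a' b' (x + al) (y + be)
  = P (a + be * x + al * be - ga) (b - al * y - ga) (x + al) (y + be).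
  move=> al be ga.
  rewrite -[RHS](@sum2_ind R _ (fun s t => P s t (x + al) (y + be))).
  apply: eq_bigr => s _; apply: eq_bigr => t _.
  congr (_%:R * _); congr (_ && _).
    by apply/eqP/eqP => ->; ring.
  by apply/eqP/eqP => ->; ring.
under eq_bigr do under eq_bigr do under eq_bigr do rewrite E.
rewrite (reindex_inj (@sub_inj _ x)) /=.
under eq_bigr => u _ do rewrite (reindex_inj (@sub_inj _ y)) /=.
under eq_bigr => u _ do under eq_bigr => v _ do
  rewrite (reindex_inj (@rsub_inj _ (a + u * v - u * y))) /=.
rewrite [RHS](eq_bigr (fun j => (j == x * y - a + b)%:R * (mu P j * (p%:R)^-1))); last first.
  move=> j _; rewrite /PR.
  have -> : (a - b == x * y - j) = (j == x * y - a + b).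
    by apply/eqP/eqP => H; [rewrite -[j](subKr (x * y)) -H; ring | rewrite H; ring].
  by case: (_ == _); rewrite ?mul1r ?mul0r ?mulr0.
rewrite sum_ind /mu exprS invfM [_ * (p%:R)^-1]mulrC -mulrA; congr (_ * (_ * _)).
apply: eq_bigr => u _; apply: eq_bigr => v _; apply: eq_bigr => k _.
congr (P _ _ _ _); ring.
Qed.

Lemma sum_ffun1 (R : realFieldType) (T : finType) (G : {ffun 'I_1 -> T} -> R) :
  \sum_(o : {ffun 'I_1 -> T}) G o = \sum_(t : T) G [ffun=> t].
Proof.
rewrite (reindex (fun t : T => [ffun=> t])) //.
apply: onW_bij; exists (fun o : {ffun 'I_1 -> T} => o ord0).
  by move=> t; rewrite ffunE.
by move=> o; apply/ffunP => i; rewrite ffunE (ord1 i).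
Qed.

Theorem lemma2 (R : realFieldType) (p : nat) (P : box R p) :
  prime p -> is_box P ->
  simulates P (PR_mixture P) /\ depolarize_protocol P = PR_mixture P.
Proof.
move=> pp _; split; last exact: depol_eq.
exists 1%N, ('F_p * 'F_p * 'F_p)%type, (fun _ => (p%:R ^+ 3)^-1),
  (fun l x _ _ => x + l.1.1),
  (fun l x (o : {ffun 'I_1 -> 'F_p}) => o ord0 - l.1.2 * x - l.1.1 * l.1.2 + l.2),
  (fun l y _ _ => y + l.1.2),
  (fun l y (o : {ffun 'I_1 -> 'F_p}) => o ord0 + l.1.1 * y + l.2).
split => //.
- by move=> l; rewrite invr_ge0 exprn_ge0 ?ler0n.
- rewrite sumr_const !card_prod card_Fp //.
  have -> : (p * p * p = p ^ 3)%N by rewrite !expnS expn0 muln1 mulnA.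
  rewrite -[(_ ^- 3) *+ _]mulr_natr natrX mulVf //.
  by rewrite expf_neq0 // pnatr_eq0 -lt0n prime_gt0.
move=> a b x y; rewrite -depol_eq // /depolarize_protocol.
rewrite pair_bigA pair_bigA mulr_sumr.
apply: eq_bigr => [[[al be] ga]] _ /=; congr (_ * _).
rewrite sum_ffun1; apply: eq_bigr => a' _; rewrite sum_ffun1; apply: eq_bigr => b' _.
by rewrite big_ord1 !ffunE [a == _]eq_sym [b == _]eq_sym.
Qed.
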